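(* For every bipartite graph $G$ with maximum degree $\Delta(G)\ge 2$, $\chi'_{qm}(G)=2$.
   Context: All graphs are simple and finite. A $k$-edge-coloring of $G$ is any map $c:E(G)\to\{1,\dots,k\}$ (adjacent edges may share colors). It is quasi-majority if every vertex $v$ is incident to at most $\lceil d(v)/2\rceil$ edges of each single color. $\chi'_{qm}(G)$ denotes the least $k$ such that $G$ has a quasi-majority $k$-edge-coloring. *)

(* Defs.v *)
From mathcomp Require Import all_boot.
Set Implicit Arguments. Unset Strict Implicit. Unset Printing Implicit Defensive.

(* A finite simple graph: vertex type V (finType), adjacency relation e,
   assumed symmetric and irreflexive (hypotheses of the theorem).
   The edge uv is represented by the 2-element set [set u; v]. *)

Definition simple_graph (V : finType) (e : rel V) : Prop :=
  symmetric e /\ irreflexive e.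

Definition bipartite (V : finType) (e : rel V) : Prop :=
  exists side : V -> bool, forall u v, e u v -> side u != side v.

Definition deg (V : finType) (e : rel V) (v : V) : nat := #|[set u | e v u]|.

Definition max_deg (V : finType) (e : rel V) : nat := \max_(v : V) deg e v.

(* A k-edge-coloring: a colour in 'I_k for each edge {u,v}
   (values on non-edges are irrelevant). *)
Definition edge_coloring (V : finType) (k : nat) := {set V} -> 'I_k.

Definition col_deg (V : finType) (e : rel V) (k : nat)
    (c : edge_coloring V k) (v : V) (i : 'I_k) : nat :=
  #|[set u | e v u & c [set v; u] == i]|.

Definition quasi_majority (V : finType) (e : rel V) (k : nat)
    (c : edge_coloring V k) : Prop :=
  forall (v : V) (i : 'I_k), col_deg e c v i <= uphalf (deg e v).

Definition qm_colorable (V : finType) (e : rel V) (k : nat) : Prop :=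
  exists c : edge_coloring V k, quasi_majority e c.

Definition chi_qm_eq (V : finType) (e : rel V) (m : nat) : Prop :=
  qm_colorable e m /\ forall k, qm_colorable e k -> m <= k.

(* Main.v *)
Require Import Defs.
From mathcomp Require Import all_boot zify.
Set Implicit Arguments. Unset Strict Implicit. Unset Printing Implicit Defensive.

Definition Dm (V : finType) (p q : V) : V -> V -> nat := fun u v => (u == p) && (v == q).
Definition addm (V : finType) (f g : V -> V -> nat) : V -> V -> nat := fun u v => f u v + g u v.
Definition outd (V : finType) (m : V -> V -> nat) x := \sum_v m x v.
Definition ind (V : finType) (m : V -> V -> nat) x := \sum_v m v x.
Definition Nm (V : finType) (m : V -> V -> nat) := \sum_u \sum_v m u v.
Definition Req (V : finType) (m m' : V -> V -> nat) := forall u v, m' u v + m' v u = m u v + m v u.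
Definition bal (V : finType) (m : V -> V -> nat) := forall x, outd m x <= ind m x + 1 /\ ind m x <= outd m x + 1.
Definition Pg (V : finType) (m : V -> V -> nat) := exists m', Req m m' /\ bal m'.
Definition nd (V : finType) (m : V -> V -> nat) x := \sum_(v | v != x) (m x v + m v x).

Lemma DC (V : finType) (p q u v : V) : Dm p q u v = Dm q p v u.
Proof. by rewrite /Dm andbC. Qed.

Lemma P_Req (V : finType) (m m1 : V -> V -> nat) : Req m m1 -> Pg m1 -> Pg m.
Proof. move=> R [m2 [R2 B2]]; exists m2; split => // u v; by rewrite R2 R. Qed.

Lemma outd_add (V : finType) (f g : V -> V -> nat) y : outd (addm f g) y = outd f y + outd g y.
Proof. by rewrite /outd /addm big_split. Qed.
Lemma ind_add (V : finType) (f g : V -> V -> nat) y : ind (addm f g) y = ind f y + ind g y.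
Proof. by rewrite /ind /addm big_split. Qed.
Lemma Nm_add (V : finType) (f g : V -> V -> nat) : Nm (addm f g) = Nm f + Nm g.
Proof. rewrite /Nm -big_split; apply eq_bigr => u _; by rewrite big_split. Qed.

Lemma sum_eq1 (V : finType) (q : V) : \sum_v (v == q : nat) = 1.
Proof. rewrite (bigD1 q) //= eqxx big1 // => v /negbTE -> //. Qed.

Lemma outd_D (V : finType) (p q y : V) : outd (Dm p q) y = (y == p).
Proof.
rewrite /outd /Dm; have [_|_] := eqVneq y p; last by rewrite big1.
exact: sum_eq1.
Qed.
Lemma ind_D (V : finType) (p q y : V) : ind (Dm p q) y = (y == q).
Proof.
rewrite /ind /Dm; have [_|_] := eqVneq y q; last by rewrite big1 // => v _; rewrite andbF.
under eq_bigr do rewrite andbT. exact: sum_eq1.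
Qed.
Lemma Nm_D (V : finType) (p q : V) : Nm (Dm p q) = 1.
Proof. rewrite /Nm. under eq_bigr do rewrite -/(outd _ _) outd_D. exact: sum_eq1. Qed.

Lemma Nm_Req (V : finType) (m m' : V -> V -> nat) : Req m m' -> Nm m = Nm m'.
Proof.
move=> R.
have E f : Nm f + Nm f = \sum_u \sum_v (f u v + f v u).
  rewrite {1}/Nm [X in _ + X]/Nm [X in _ + X]exchange_big /= -big_split.
  by apply eq_bigr => u _; rewrite -big_split.
suff : Nm m + Nm m = Nm m' + Nm m' by lia.
rewrite !E; apply eq_bigr => u _; apply eq_bigr => v _; by rewrite R.
Qed.

Lemma outd_ext (V : finType) (f g : V -> V -> nat) y : (forall u v, f u v = g u v) -> outd f y = outd g y.
Proof. move=> H; apply eq_bigr => v _; exact: H. Qed.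
Lemma ind_ext (V : finType) (f g : V -> V -> nat) y : (forall u v, f u v = g u v) -> ind f y = ind g y.
Proof. move=> H; apply eq_bigr => v _; exact: H. Qed.

Lemma merge_core (V : finType) (m0 m3 : V -> V -> nat) a b x :
  Req (addm m0 (Dm a b)) m3 -> bal m3 -> 0 < m3 a b ->
  Pg (addm (addm m0 (Dm a x)) (Dm b x)).
Proof.
move=> R3 B3 hab.
pose m3' := fun u v => m3 u v - Dm a b u v.
have E3 : forall u v, m3 u v = addm m3' (Dm a b) u v.
  move=> u v; rewrite /addm /m3' /Dm.
  have [->|] := eqVneq u a; have [->|] := eqVneq v b => //= *; lia.
exists (addm (addm m3' (Dm a x)) (Dm x b)); split.
  move=> u v; have := R3 u v; rewrite (E3 u v) (E3 v u) /addm.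
  rewrite (DC x b u v) (DC x b v u); lia.
move=> y; have := B3 y.
rewrite (outd_ext y E3) (ind_ext y E3) !outd_add !ind_add !outd_D !ind_D; lia.
Qed.

Lemma merge (V : finType) (m0 : V -> V -> nat) a b x :
  Pg (addm m0 (Dm a b)) -> Pg (addm (addm m0 (Dm a x)) (Dm b x)).
Proof.
case=> m3 [R3 B3].
have h := R3 a b; rewrite /addm in h; have e1 : Dm a b a b = 1 by rewrite /Dm !eqxx.
have [hab|hba] : 0 < m3 a b \/ 0 < m3 b a by lia.
  exact: merge_core R3 B3 hab.
have R3' : Req (addm m0 (Dm b a)) m3.
  move=> u v; rewrite R3 /addm (DC a b u v) (DC a b v u); lia.
apply: (@P_Req _ _ (addm (addm m0 (Dm b x)) (Dm a x))); last exact: merge_core R3' B3 hba.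
move=> u v; rewrite /addm; lia.
Qed.

Lemma base (V : finType) (m : V -> V -> nat) : (forall x, nd m x <= 1) -> bal m.
Proof.
move=> H x; have := H x; rewrite /nd /outd /ind big_split /=.
rewrite (bigD1 x (P := xpredT)) //= [\sum_v m v x](bigD1 x) //=.
lia.
Qed.

Lemma step (V : finType) (m : V -> V -> nat) :
  (forall m' : V -> V -> nat, Nm m' < Nm m -> Pg m') -> Pg m.
Proof.
move=> IH.
case: (boolP [forall x, nd m x <= 1]) => [/forallP H | /forallPn [x Hx]].
  by exists m; split; [move=> u v | exact: base].
rewrite -ltnNge in Hx.
case: (pickP (fun a => (a != x) && (0 < m x a + m a x))) => [a /andP [ax Ha] | H0]; last first.
  move: Hx; rewrite /nd big1 // => v vx; have := H0 v; rewrite /= vx /=; lia.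
case: (pickP (fun b => (b != x) && ((a == b) < m x b + m b x))) => [b /andP [bx Hb] | H0]; last first.
  move: Hx; rewrite /nd => Hx.
  have : \sum_(v | v != x) (m x v + m v x) <= \sum_(v | v != x) (v == a : nat).
    apply: leq_sum => v vx; have := H0 v; rewrite /= vx /= eq_sym; lia.
  have : \sum_(v | v != x) (v == a : nat) <= \sum_v (v == a : nat).
    by rewrite [X in _ <= X](bigID (fun v => v != x)) /= leq_addr.
  rewrite sum_eq1; lia.
pose m1 := fun u v => if u == x then (if v == x then m x x else 0)
                     else if v == x then m u x + m x u else m u v.
have R1 : Req m m1.
  move=> u v; rewrite /m1.
  have [->|ux] := eqVneq u x; have [->|vx] := eqVneq v x; rewrite ?eqxx //=; lia.
pose m0 := fun u v => m1 u v - Dm a x u v - Dm b x u v.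
have E1 : forall u v, m1 u v = addm (addm m0 (Dm a x)) (Dm b x) u v.
  move=> u v; rewrite /addm /m0 /Dm.
  have [->|vx] := eqVneq v x; last by rewrite !andbF !subn0 !addn0.
  rewrite !andbT.
  have [->|ua] := eqVneq u a.
    rewrite /m1 (negbTE ax) eqxx.
    have [eab|ab] := eqVneq a b; [subst b; rewrite ?eqxx /= | rewrite ?eqxx /=].
      move: Hb; rewrite eqxx /=; lia.
    move: Hb; rewrite (negbTE ab) /=; lia.
  have [eub|ub] := eqVneq u b; rewrite /=.
    subst u; rewrite /m1 (negbTE bx) eqxx; move: Hb; rewrite eq_sym (negbTE ua) /=; lia.
  lia.
have R2 : Req m1 (addm (addm m0 (Dm a x)) (Dm b x)).
  by move=> u v; rewrite -!E1.
apply: (P_Req R1); apply: (P_Req R2); apply: merge; apply: IH.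
rewrite (Nm_Req R1) (Nm_Req R2) !Nm_add !Nm_D; lia.
Qed.

Lemma balanced_exists (V : finType) (m : V -> V -> nat) : Pg m.
Proof.
have H : forall n (m : V -> V -> nat), Nm m <= n -> Pg m.
  elim=> [|n IHn] m' Hn; apply: step => m'' lt; last by apply: IHn; lia.
  lia.
exact: H (leqnn _).
Qed.

Lemma set2_inv (T : finType) (y u a b : T) : y != u -> [set y; u] = [set a; b] ->
  (a = y /\ b = u) \/ (a = u /\ b = y).
Proof.
move=> yu E.
have : a \in [set y; u] by rewrite E set21.
have : b \in [set y; u] by rewrite E set22.
have : u \in [set a; b] by rewrite -E set22.
have : y \in [set a; b] by rewrite -E set21.
move=> /set2P [] h1 /set2P [] h2 /set2P [] h3 /set2P [] h4; subst;
  try (by left); try (by right); by rewrite eqxx in yu.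
Qed.

Lemma card_le1 (V : finType) (f : V -> nat) : (forall u, f u <= 1) ->
  #|[set u | 0 < f u]| = \sum_u f u.
Proof.
move=> H; rewrite -sum1_card big_mkcond /=; apply eq_bigr => u _.
rewrite inE; have := H u; by case: (f u) => [|[|]].
Qed.

Theorem mainTheorem14 (V : finType) (e : rel V) :
  simple_graph e -> bipartite e -> 2 <= max_deg e -> chi_qm_eq e 2.
Proof.
move=> [esym eirr] [side Hside] Hmax.
split; last first.
  move=> [|[|k]] [c Hc] //.
    by case: (c set0) => [].
  case: (pickP (fun y => 1 < deg e y)) => [y Hy|H]; last first.
    have : max_deg e <= 1 by apply/bigmax_leqP => y _; rewrite leqNgt H.
    lia.
  have := Hc y ord0; rewrite /col_deg.
  have -> : [set u | e y u & c [set y; u] == ord0] = [set u | e y u].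
    by apply/setP => u; rewrite !inE (ord1 (c _)) eqxx andbT.
  rewrite -/(deg e y) uphalf_half; move: Hy; lia.
pose m : V -> V -> nat := fun u v => (~~ side u) && e u v.
have Hm : forall u v, m u v + m v u = e u v.
  move=> u v; rewrite /m [e v u]esym.
  case: (boolP (e u v)) => E; last by rewrite !andbF.
  by have := Hside u v E; case: (side u); case: (side v).
have [m' [Rm Bm]] := balanced_exists m.
have Hm' u v : m' u v + m' v u = e u v by rewrite Rm Hm.
pose c : edge_coloring V 2 := fun S =>
  if [exists u, exists v, (S == [set u; v]) && (~~ side u) && (0 < m' u v)]
  then ord0 else ord_max.
have key : forall y u, e y u ->
    (c [set y; u] == ord0) = (if side y then 0 < m' u y else 0 < m' y u).
  move=> y u Eyu.
  have yu : y != u by apply/eqP => h; subst; rewrite eirr in Eyu.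
  have sd := Hside y u Eyu.
  rewrite /c; case: ifP => [/existsP [a /existsP [b /andP [/andP [/eqP Hs Ha] Hab]]]|/negbT Hn].
    have [[? ?]|[? ?]] := set2_inv yu Hs; subst a b.
      by move: Ha; case: (side y).
    by move: Ha sd; case: (side y); case: (side u).
  move: Hn => /existsPn Hn.
  transitivity false; first by [].
  move: sd; case Sy: (side y) => sd; symmetry; apply/negbTE/negP => H.
    have := Hn u; move/existsPn => /(_ y); rewrite setUC eqxx H andbT /=.
    by move: sd; case: (side u).
  by have := Hn y; move/existsPn => /(_ u); rewrite eqxx H Sy.
exists c => y i.
pose A := [set u | 0 < m' y u]; pose B := [set u | 0 < m' u y].
have cA : #|A| = outd m' y.
  rewrite card_le1 // => u; have := Hm' y u; case: (e y u); lia.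
have cB : #|B| = ind m' y.
  rewrite card_le1 // => u; have := Hm' u y; case: (e u y); lia.
have dg : deg e y = #|A| + #|B|.
  rewrite cA cB /deg /outd /ind -big_split /=.
  rewrite -card_le1; last by move=> u; rewrite Hm'; case: (e y u).
  by apply: eq_card => u; rewrite !inE Hm' lt0b.
have Hi : i = ord0 \/ i = ord_max.
  by case: i => [[|[|]]] // ?; [left|right]; apply/val_inj.
have EA : forall u, e y u -> (0 < m' u y) = ~~ (0 < m' y u).
  move=> u E; have := Hm' y u; rewrite E -leqNgt => h; apply/idP/idP => ?; lia.
have ne : forall u, ~~ e y u -> (0 < m' y u) = false /\ (0 < m' u y) = false.
  move=> u /negbTE E; have := Hm' y u; rewrite E => h.
  by split; apply/negbTE; rewrite -leqNgt; lia.
have cmax : forall S, (c S == ord_max) = ~~ (c S == ord0).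
  by move=> S; case: (c S) => [[|[|]]].
have col : col_deg e c y i = #|A| \/ col_deg e c y i = #|B|.
  rewrite /col_deg; case: Hi => ->; case Sy: (side y); [right|left|left|right];
  apply: eq_card => u; rewrite !inE;
  (case E: (e y u) => /=; [rewrite ?cmax key // Sy ?(EA u E) ?negbK // | by have [h1 h2] := ne u (negbT E); rewrite ?h1 ?h2]).
have := Bm y; rewrite -cA -cB dg; case: col => ->; rewrite uphalf_half; lia.
Qed.
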